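(* Let $(M,\bar g)$ be an umbilically synchronized space-time and let $V$ be a conformal vector field on $M$ ($\pounds_V\bar g=2\psi\bar g$ for a smooth function $\psi$) that is tangential to the spatial slices $\Sigma_t$. Then $V$ is Killing if and only if the lapse function $N$ is constant along $V$ (i.e. $V(N)=0$), equivalently, if and only if $V$ is orthogonal to the acceleration vector field $\mathbf A=\bar\nabla_{\mathbf n}\mathbf n$.
   Context: An umbilically synchronized space-time is an $(n+1)$-dimensional Lorentzian manifold $M$ with coordinates $(t,x^1,\dots,x^n)$ and metric $ds^2=-N^2dt^2+g_{ij}dx^idx^j$ (zero shift), lapse $N>0$, such that each spatial slice $\Sigma_t=\{t=\text{const}\}$ is totally umbilical: $K_{ij}=\bar g(\bar\nabla_{\partial_i}\mathbf n,\partial_j)=\tau g_{ij}$, where $\mathbf n=\frac1N\partial_t$ is the unit normal and $\tau$ the mean curvature. The acceleration $\mathbf A=\bar\nabla_{\mathbf n}\mathbf n$ equals the spatial gradient of $\ln N$. *)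

(* Defs.v *)
(* Coordinate formalization of an umbilically
   synchronized space-time on a coordinate domain U (open subset of R^(n+1)),
   coordinates x = (x^0 = t, x^1, ..., x^n), indices 'I_(n.+1), index ord0 = t. *)
From HB Require Import structures.
From mathcomp Require Import all_boot all_order all_algebra.
From mathcomp Require Import all_classical all_reals all_analysis.
Set Implicit Arguments. Unset Strict Implicit. Unset Printing Implicit Defensive.
Import Order.TTheory GRing.Theory Num.Theory.
Import numFieldNormedType.Exports.
Local Open Scope classical_set_scope.
Local Open Scope ring_scope.

Section Defs.
Variables (R : realType) (n : nat).

Definition pt := 'rV[R]_(n.+1).

Definition cvec (a : 'I_(n.+1)) : pt := delta_mx 0 a.

Definition pd (a : 'I_(n.+1)) (f : pt -> R) : pt -> R :=
  fun x => 'D_(cvec a) f x.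

Definition iter_pd (s : seq 'I_(n.+1)) (f : pt -> R) : pt -> R := foldr pd f s.

Definition smooth_on (U : set pt) (f : pt -> R) : Prop :=
  forall (s : seq 'I_(n.+1)) (x : pt), U x -> differentiable (iter_pd s f) x.

(* spacetime metric with zero shift: -N^2 dt^2 + g_ij dx^i dx^j *)
Definition gbar (N : pt -> R) (g : 'I_n -> 'I_n -> pt -> R)
  (a b : 'I_(n.+1)) (x : pt) : R :=
  match unlift ord0 a, unlift ord0 b with
  | Some i, Some j => g i j x
  | None, None => - (N x ^+ 2)
  | _, _ => 0
  end.

(* Christoffel symbols of the first kind: Gamma_{c,ab} = gbar(nabla_a d_b, d_c) *)
Definition christoffel1 (G : 'I_(n.+1) -> 'I_(n.+1) -> pt -> R)
  (c a b : 'I_(n.+1)) (x : pt) : R :=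
  2^-1 * (pd a (G b c) x + pd b (G a c) x - pd c (G a b) x).

(* gbar(nabla_X Y, Z) for the Levi-Civita connection, vector fields given by
   their coordinate components *)
Definition conn_pair (G : 'I_(n.+1) -> 'I_(n.+1) -> pt -> R)
  (X Y Z : 'I_(n.+1) -> pt -> R) (x : pt) : R :=
  \sum_(a < n.+1) \sum_(b < n.+1) \sum_(c < n.+1)
    X a x * Z c x * (pd a (Y b) x * G b c x + Y b x * christoffel1 G c a b x).

Definition unit_normal (N : pt -> R) (a : 'I_(n.+1)) (x : pt) : R :=
  if a == ord0 then (N x)^-1 else 0.

Definition spatial_field (i : 'I_n) (a : 'I_(n.+1)) (x : pt) : R :=
  if a == lift ord0 i then 1 else 0.

Definition second_ff (N : pt -> R) (g : 'I_n -> 'I_n -> pt -> R)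
  (i j : 'I_n) (x : pt) : R :=
  conn_pair (gbar N g) (spatial_field i) (unit_normal N) (spatial_field j) x.

Definition accel_pair (N : pt -> R) (g : 'I_n -> 'I_n -> pt -> R)
  (V : 'I_(n.+1) -> pt -> R) (x : pt) : R :=
  conn_pair (gbar N g) (unit_normal N) (unit_normal N) V x.

Definition lie_metric (G : 'I_(n.+1) -> 'I_(n.+1) -> pt -> R)
  (V : 'I_(n.+1) -> pt -> R) (a b : 'I_(n.+1)) (x : pt) : R :=
  \sum_(c < n.+1) (V c x * pd c (G a b) x + G c b x * pd a (V c) x
                   + G a c x * pd b (V c) x).

Definition vf_apply (V : 'I_(n.+1) -> pt -> R) (f : pt -> R) (x : pt) : R :=
  \sum_(c < n.+1) V c x * pd c f x.

Definition umbilically_synchronized (U : set pt) (N : pt -> R)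
  (g : 'I_n -> 'I_n -> pt -> R) : Prop :=
  open U /\
  smooth_on U N /\ (forall i j, smooth_on U (g i j)) /\
  (forall x, U x -> 0 < N x) /\
  (forall i j x, U x -> g i j x = g j i x) /\
  (forall (v : 'I_n -> R) x, U x -> (exists i, v i != 0) ->
      0 < \sum_(i < n) \sum_(j < n) v i * v j * g i j x) /\
  (exists tau : pt -> R, forall i j x, U x ->
      second_ff N g i j x = tau x * g i j x).

Definition conformal_on (U : set pt) (G : 'I_(n.+1) -> 'I_(n.+1) -> pt -> R)
  (V : 'I_(n.+1) -> pt -> R) : Prop :=
  exists psi : pt -> R, smooth_on U psi /\
    forall a b x, U x -> lie_metric G V a b x = 2 * psi x * G a b x.

Definition killing_on (U : set pt) (G : 'I_(n.+1) -> 'I_(n.+1) -> pt -> R)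
  (V : 'I_(n.+1) -> pt -> R) : Prop :=
  forall a b x, U x -> lie_metric G V a b x = 0.

End Defs.

(* Main.v *)
Require Import Defs.
From mathcomp Require Import all_boot all_order all_algebra.
From mathcomp Require Import all_classical all_reals all_analysis.
From mathcomp Require Import ring lra.
Import Order.TTheory GRing.Theory Num.Theory.
Import numFieldNormedType.Exports.
Local Open Scope classical_set_scope.
Local Open Scope ring_scope.

Section Aux.
Variables (R : realType) (n : nat).

Lemma pd_sq (N : pt R n -> R) c x : differentiable N x ->
  pd c (fun y => - (N y ^+ 2)) x = - (2 * N x * pd c N x).
Proof.
move=> dN; rewrite /pd.
have -> : (fun y => - (N y ^+ 2)) = - (N ^+ 2).
  by apply: funext => y /=; rewrite exprfctE.
rewrite deriveN; last exact/derivableX/diff_derivable.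
rewrite deriveX; last exact/diff_derivable.
by rewrite /= expr1.
Qed.

Lemma pd_zero c (x : pt R n) : pd c (fun _ : pt R n => (0:R)) x = 0.
Proof. by rewrite /pd; exact: (derive_cst (0:R)). Qed.

Lemma pd_loc0 (U : set 'rV[R]_(n.+1)) (f : 'rV[R]_(n.+1) -> R) (c : 'I_n.+1) (x : 'rV[R]_(n.+1)) : open U -> U x ->
  (forall y, U y -> f y = 0) -> pd c f x = 0.
Proof.
move=> oU Ux f0; rewrite /pd.
rewrite (@near_eq_derive _ _ _ f (cst 0)); first exact: derive_cst.
have : nbhs x U by apply: open_nbhs_nbhs; split.
by apply: filterS => y /f0.
Qed.

Lemma gbar00 N g : gbar N g ord0 ord0 = fun x : pt R n => - (N x ^+ 2).
Proof. by rewrite /gbar unlift_none. Qed.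

Lemma gbar0c N g (c : 'I_n.+1) : c != ord0 ->
  gbar N g ord0 c = (fun _ : pt R n => 0) /\ gbar N g c ord0 = (fun _ => 0).
Proof.
case: (unliftP ord0 c) => [j ->|->]; last by rewrite eqxx.
move=> _; rewrite /gbar unlift_none liftK; split; apply: funext => y //.
Qed.

End Aux.

Theorem theorem4 (R : realType) (n : nat) (U : set (pt R n))
  (N : pt R n -> R) (g : 'I_n -> 'I_n -> pt R n -> R)
  (V : 'I_(n.+1) -> pt R n -> R) :
  umbilically_synchronized U N g ->
  (forall a, smooth_on U (V a)) ->
  (forall x, U x -> V ord0 x = 0) ->
  conformal_on U (gbar N g) V ->
  (killing_on U (gbar N g) V <-> (forall x, U x -> vf_apply V N x = 0)) /\
  (killing_on U (gbar N g) V <-> (forall x, U x -> accel_pair N g V x = 0)).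
Proof.
move=> [oU [sN [_ [Npos _]]]] _ V0 [psi [_ hpsi]].
have dN : forall x, U x -> differentiable N x by move=> x Ux; exact: (sN [::]).
have L00 : forall x, U x -> lie_metric (gbar N g) V ord0 ord0 x = - (2 * N x * vf_apply V N x).
  move=> x Ux; rewrite /lie_metric /vf_apply mulr_sumr -sumrN; apply: eq_bigr => c _.
  have [->|c0] := eqVneq c ord0.
    rewrite V0 // (@pd_loc0 _ _ _ _ ord0 _ oU Ux V0) !mul0r !mulr0 !addr0; lra.
  have [h1 h2] := @gbar0c _ _ N g c c0.
  by rewrite h1 h2 !mul0r !addr0 gbar00 (@pd_sq _ _ N c x (dN x Ux)) // mulrN mulrCA.
have un0 : forall b : 'I_n.+1, b != ord0 -> unit_normal N b = fun _ => 0.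
  by move=> b /negPf b0; apply: funext => y; rewrite /unit_normal b0.
have Acc : forall x, U x -> accel_pair N g V x = vf_apply V N x / N x.
  move=> x Ux; rewrite /accel_pair /conn_pair /vf_apply.
  rewrite (bigD1 ord0) //= [X in _ + X]big1 ?addr0; last first.
    move=> a /negPf a0; apply: big1 => b _; apply: big1 => c _.
    by rewrite /unit_normal a0 !mul0r.
  rewrite (bigD1 ord0) //= [X in _ + X]big1 ?addr0; last first.
    move=> b b0; apply: big1 => c _.
    by rewrite (un0 b b0) pd_zero !mul0r add0r mulr0.
  rewrite mulr_suml; apply: eq_bigr => c _.
  have [->|c0] := eqVneq c ord0; first by rewrite V0 // !(mul0r, mulr0).
  have [h1 h2] := @gbar0c _ _ N g c c0.
  rewrite /christoffel1 h1 !pd_zero gbar00 (@pd_sq _ _ N c x (dN x Ux)) // /unit_normal eqxx.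
  have Nx0 : N x != 0 by rewrite gt_eqF ?Npos.
  field; exact: Nx0.
have K1 : killing_on U (gbar N g) V <-> (forall x, U x -> vf_apply V N x = 0).
  split.
    move=> K x Ux; have := L00 x Ux; rewrite K // => /esym /eqP.
    rewrite oppr_eq0 !mulf_eq0 pnatr_eq0 /= gt_eqF ?Npos //=.
    by move/eqP.
  move=> h a b x Ux; rewrite hpsi //.
  have := hpsi ord0 ord0 x Ux; rewrite L00 // h // gbar00 mulr0 oppr0 => /esym /eqP.
  have Nx0 : N x != 0 by rewrite gt_eqF ?Npos.
  rewrite mulrN oppr_eq0 mulf_eq0 expf_eq0 (negPf Nx0) andbF orbF mulf_eq0.
  by case/orP => /eqP ->; rewrite ?mulr0 ?mul0r.
split=> //; rewrite K1; split=> h x Ux.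
  by rewrite Acc // h // mul0r.
have := h x Ux; rewrite Acc // => /eqP; rewrite mulf_eq0 invr_eq0.
have Nx0 : N x != 0 by rewrite gt_eqF ?Npos.
by rewrite (negPf Nx0) orbF => /eqP.
Qed.
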